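(* Let $n$ be such that $\theta^n=\mathrm{id}$, let $a\in\mathbb F^*$ with $\theta(a)=a$ (so $x^n-a$ is central in $\mathcal R$ and $\mathcal S_a$ is a ring), and suppose $x^n-a=hg$ with $g,h\in\mathcal R$. Then: (1) $M^\theta_a$ induces an injective ring homomorphism $\mathcal S_a\to\mathbb F^{n\times n}$; (2) $x^n-a=gh$; (3) $M^\theta_a(\overline g)M^\theta_a(\overline h)=M^\theta_a(\overline h)M^\theta_a(\overline g)=0$; (4) the maps $\psi_h:\mathcal S_a\to\mathcal S_a$, $\overline f\mapsto\overline{fh}$ and $\psi_g:\mathcal S_a\to\mathcal S_a$, $\overline f\mapsto\overline{fg}$ are left $\mathcal R$-module homomorphisms with $\ker\psi_h=\mathcal R\overline g=\mathrm{ann}_l(\overline h\,\mathcal S_a)$ and $\ker\psi_g=\mathcal R\overline h=\mathrm{ann}_l(\overline g\,\mathcal S_a)$; (5) the maps $\psi'_h:\overline f\mapsto\overline{hf}$ and $\psi'_g:\overline f\mapsto\overline{gf}$ on $\mathcal S_a$ are right $\mathcal R$-module homomorphisms with $\ker\psi'_h=\overline g\,\mathcal S_a=\mathrm{ann}_r(\mathcal S_a\overline h)$ and $\ker\psi'_g=\overline h\,\mathcal S_a=\mathrm{ann}_r(\mathcal S_a\overline g)$; (6) if $\mathcal C=\mathfrak v_a(\mathcal R\overline g)$ and $h=\sum_{i=0}^kh_ix^i$ with $h_k\ne0$, then $\mathcal C^\perp=\mathfrak v_{a^{-1}}(\mathcal R\overline{\rho_l(h)})$, where $\rho_l(h)=h_k+\theta(h_{k-1})x+\dots+\theta^k(h_0)x^k$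 and the coset is taken in $\mathcal R/\mathcal R(x^n-a^{-1})$.
   Context: $\mathbb F$ is a finite field, $\theta\in\mathrm{Aut}(\mathbb F)$, $\mathcal R=\mathbb F[x;\theta]$ the skew polynomial ring (elements $\sum f_ix^i$ with left coefficients, multiplication determined by $xb=\theta(b)x$). For $e\in\mathbb F^*$, $\mathcal S_e=\mathcal R/\mathcal R(x^n-e)$, $\overline f$ the coset of $f$, $\mathcal R\overline f$ the left submodule generated by $\overline f$, $\overline f\,\mathcal S_a$ the right ideal of the ring $\mathcal S_a$ generated by $\overline f$; $\mathrm{ann}_l(X)=\{s\in\mathcal S_a: sX=0\}$ and $\mathrm{ann}_r(X)=\{s\in\mathcal S_a: Xs=0\}$. $\mathfrak v_e:\mathcal S_e\to\mathbb F^n$ is the inverse of $(c_0,\dots,c_{n-1})\mapsto\overline{\sum_{i=0}^{n-1}c_ix^i}$, and $M^\theta_a(\overline f)$ is the $n\times n$ matrix whose row with index $i$ ($0\le i\le n-1$) is $\mathfrak v_a(\overline{x^if})$. $\mathcal C^\perp$ is the dual code with respect to the standard bilinear form on $\mathbb F^n$. *)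

(* Defs.v *)
From HB Require Import structures.
From mathcomp Require Import all_boot all_order all_algebra all_field.
From mathcomp Require Import boolp.
Set Implicit Arguments. Unset Strict Implicit. Unset Printing Implicit Defensive.
Import GRing.Theory.
Local Open Scope ring_scope.

Section SkewPoly.
Variable F : finFieldType.
Variable theta : F -> F.

(* Skew polynomials sum_i f_i x^i (left coefficients) are represented by
   their coefficient sequence, i.e. by an element of {poly F}.  The skew
   product is determined by x b = theta(b) x:
     (sum_i f_i x^i) (sum_j g_j x^j) = sum_{i,j} f_i theta^i(g_j) x^(i+j). *)
Definition smul (f g : {poly F}) : {poly F} :=
  \sum_(i < size f) \sum_(j < size g)
     (f`_i * iter i theta g`_j) *: 'X^(i + j).

Definition xn_e (n : nat) (e : F) : {poly F} := 'X^n - e%:P.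

(* f and f' have the same coset in S_e = R / R(x^n - e),
   i.e. f - f' lies in the left ideal R (x^n - e). *)
Definition cong (n : nat) (e : F) (f f' : {poly F}) : Prop :=
  exists q : {poly F}, f - f' = smul q (xn_e n e).

Definition poly_of_vec (n : nat) (c : 'rV[F]_n) : {poly F} :=
  \sum_(i < n) c 0 i *: 'X^i.

(* v_e : S_e -> F^n, inverse of c |-> coset of sum_{i<n} c_i x^i; on a
   representative f it returns the (unique) c with f in the coset of
   sum c_i x^i. *)
Definition vv (n : nat) (e : F) (f : {poly F}) : 'rV[F]_n :=
  odflt 0 [pick c : 'rV[F]_n | `[< cong n e f (poly_of_vec c) >] ].

Definition Mth (n : nat) (e : F) (f : {poly F}) : 'M[F]_n :=
  \matrix_(i < n, j < n) vv n e (smul 'X^i f) 0 j.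

Definition rho_l (h : {poly F}) : {poly F} :=
  \poly_(i < size h) iter i theta h`_((size h).-1 - i).

End SkewPoly.

Definition dotv (F : fieldType) (n : nat) (u c : 'rV[F]_n) : F :=
  \sum_(i < n) u 0 i * c 0 i.

(* Main.v *)
Require Import Defs.
From HB Require Import structures.
From mathcomp Require Import all_boot all_order all_algebra all_field.
From mathcomp Require Import boolp zify.
Set Implicit Arguments. Unset Strict Implicit. Unset Printing Implicit Defensive.
Import GRing.Theory.
Local Open Scope ring_scope.

Section Skew.
Variable F : finFieldType.
Variable theta : {rmorphism F -> F}.

Local Notation sm := (smul theta).
Implicit Types (f g : {poly F}) (c d : F).

Lemma thiD i x y : iter i theta (x + y) = iter i theta x + iter i theta y.
Proof. by elim: i => //= i ->; rewrite rmorphD. Qed.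
Lemma thiM i x y : iter i theta (x * y) = iter i theta x * iter i theta y.
Proof. by elim: i => //= i ->; rewrite rmorphM. Qed.
Lemma thi0 i : iter i theta 0 = 0.
Proof. by elim: i => //= i ->; rewrite rmorph0. Qed.
Lemma thi1 i : iter i theta 1 = 1.
Proof. by elim: i => //= i ->; rewrite rmorph1. Qed.
Lemma thiN i x : iter i theta (- x) = - iter i theta x.
Proof. by elim: i => //= i ->; rewrite rmorphN. Qed.
Lemma thiV i x : iter i theta (x^-1) = (iter i theta x)^-1.
Proof. by elim: i => //= i ->; rewrite fmorphV. Qed.
Lemma thi_eq0 i x : (iter i theta x == 0) = (x == 0).
Proof. by elim: i => //= i <-; rewrite fmorph_eq0. Qed.
Lemma thi_fix i c : theta c = c -> iter i theta c = c.
Proof. by move=> Hc; elim: i => //= i ->. Qed.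

Lemma sum_pad (V : zmodType) n N (G : nat -> V) : (n <= N)%N ->
  (forall i, (n <= i)%N -> G i = 0) -> \sum_(i < N) G i = \sum_(i < n) G i.
Proof.
move=> le H; rewrite [RHS](big_ord_widen N G le) [RHS]big_mkcond /=; apply: eq_bigr => i _.
by case: ifP => // /negbT; rewrite -leqNgt => /H ->.
Qed.
Arguments sum_pad {V n N G}.

Lemma smul_pad N M f g : (size f <= N)%N -> (size g <= M)%N ->
  sm f g = \sum_(i < N) \sum_(j < M) (f`_i * iter i theta g`_j) *: 'X^(i + j).
Proof.
move=> Hf Hg; rewrite /smul (sum_pad (G := fun i => \sum_(j < M) (f`_i * iter i theta g`_j) *: 'X^(i + j)) Hf); last first.
  move=> i Hi; apply: big1 => j _; by rewrite nth_default // mul0r scale0r.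
by apply: eq_bigr => i _; rewrite (sum_pad (G := fun j => (f`_i * iter i theta g`_j) *: 'X^(i + j)) Hg) // => j Hj; rewrite (nth_default 0 Hj) thi0 mulr0 scale0r.
Qed.

Arguments smul_pad N M {f g}.

Lemma smulDl f (f' : {poly F}) g : sm (f + f') g = sm f g + sm f' g.
Proof.
pose N := maxn (size f) (size f').
rewrite !(smul_pad N (size g)) ?leq_maxl ?leq_maxr ?size_polyD //.
rewrite -big_split; apply: eq_bigr => i _; rewrite -big_split; apply: eq_bigr => j _.
by rewrite coefD mulrDl scalerDl.
Qed.

Lemma smulDr f g (g' : {poly F}) : sm f (g + g') = sm f g + sm f g'.
Proof.
pose M := maxn (size g) (size g').
rewrite !(smul_pad (size f) M) ?leq_maxl ?leq_maxr ?size_polyD //.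
rewrite -big_split; apply: eq_bigr => i _; rewrite -big_split; apply: eq_bigr => j _.
by rewrite coefD thiD mulrDr scalerDl.
Qed.

Lemma smul0l g : sm 0 g = 0.
Proof. by rewrite /smul size_poly0 big_ord0. Qed.
Lemma smul0r f : sm f 0 = 0.
Proof. by rewrite /smul size_poly0 big1 // => i _; rewrite big_ord0. Qed.

Lemma smulZl c f g : sm (c *: f) g = c *: sm f g.
Proof.
rewrite !(smul_pad (size f) (size g)) ?size_scale_leq // scaler_sumr.
apply: eq_bigr => i _; rewrite scaler_sumr; apply: eq_bigr => j _.
by rewrite coefZ scalerA mulrA.
Qed.

Lemma smulNl f g : sm (- f) g = - sm f g.
Proof. by rewrite -scaleN1r smulZl scaleN1r. Qed.
Lemma smulNr f g : sm f (- g) = - sm f g.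
Proof. by apply: (addIr (sm f g)); rewrite -smulDr !addNr smul0r. Qed.
Lemma smulBl f (f' : {poly F}) g : sm (f - f') g = sm f g - sm f' g.
Proof. by rewrite smulDl smulNl. Qed.
Lemma smulBr f g (g' : {poly F}) : sm f (g - g') = sm f g - sm f g'.
Proof. by rewrite smulDr smulNr. Qed.

Lemma smul_suml (I : Type) (r : seq I) (P : pred I) (G : I -> {poly F}) g :
  sm (\sum_(i <- r | P i) G i) g = \sum_(i <- r | P i) sm (G i) g.
Proof. by elim/big_rec2: _ => [|i x y _ <-]; rewrite ?smul0l ?smulDl. Qed.
Lemma smul_sumr (I : Type) (r : seq I) (P : pred I) (G : I -> {poly F}) f :
  sm f (\sum_(i <- r | P i) G i) = \sum_(i <- r | P i) sm f (G i).
Proof. by elim/big_rec2: _ => [|i x y _ <-]; rewrite ?smul0r ?smulDr. Qed.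

Lemma smul_mono c i d j :
  sm (c *: 'X^i) (d *: 'X^j) = (c * iter i theta d) *: 'X^(i + j).
Proof.
rewrite (smul_pad i.+1 j.+1) ?(leq_trans (size_scale_leq _ _)) ?size_polyXn //.
rewrite big_ord_recr /= big1 ?add0r => [|k _]; last first.
  by rewrite big1 // => l _; rewrite coefZ coefXn ltn_eqF // mulr0 mul0r scale0r.
rewrite big_ord_recr /= big1 ?add0r => [|l _]; last first.
  by rewrite !coefZ !coefXn (ltn_eqF (ltn_ord l)) mulr0 thi0 mulr0 scale0r.
by rewrite !coefZ !coefXn !eqxx !mulr1.
Qed.

Lemma poly_mono f : f = \sum_(i < size f) f`_i *: 'X^i.
Proof. by rewrite -poly_def coefK. Qed.


Lemma coef_smul f g m : (sm f g)`_m =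
  \sum_(i < size f) \sum_(j < size g) (f`_i * iter i theta g`_j) * ((i + j)%N == m)%:R.
Proof.
rewrite /smul coef_sum; apply: eq_bigr => i _; rewrite coef_sum; apply: eq_bigr => j _.
by rewrite coefZ coefXn eq_sym.
Qed.

Definition ms := locked (smul theta).
Lemma msE : smul theta = ms. Proof. by rewrite /ms -lock. Qed.

Lemma msDl f (f' : {poly F}) g : ms (f + f') g = ms f g + ms f' g.
Proof. by rewrite -msE smulDl. Qed.
Lemma msDr f g (g' : {poly F}) : ms f (g + g') = ms f g + ms f g'.
Proof. by rewrite -msE smulDr. Qed.
Lemma ms0l g : ms 0 g = 0. Proof. by rewrite -msE smul0l. Qed.
Lemma ms0r f : ms f 0 = 0. Proof. by rewrite -msE smul0r. Qed.
Lemma msZl c f g : ms (c *: f) g = c *: ms f g. Proof. by rewrite -msE smulZl. Qed.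
Lemma msNl f g : ms (- f) g = - ms f g. Proof. by rewrite -msE smulNl. Qed.
Lemma msNr f g : ms f (- g) = - ms f g. Proof. by rewrite -msE smulNr. Qed.
Lemma msBl f (f' : {poly F}) g : ms (f - f') g = ms f g - ms f' g.
Proof. by rewrite -msE smulBl. Qed.
Lemma msBr f g (g' : {poly F}) : ms f (g - g') = ms f g - ms f g'.
Proof. by rewrite -msE smulBr. Qed.
Lemma ms_suml (I : Type) (r : seq I) (P : pred I) (G : I -> {poly F}) g :
  ms (\sum_(i <- r | P i) G i) g = \sum_(i <- r | P i) ms (G i) g.
Proof. by rewrite -msE smul_suml. Qed.
Lemma ms_sumr (I : Type) (r : seq I) (P : pred I) (G : I -> {poly F}) f :
  ms f (\sum_(i <- r | P i) G i) = \sum_(i <- r | P i) ms f (G i).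
Proof. by rewrite -msE smul_sumr. Qed.
Lemma ms_mono c i d j :
  ms (c *: 'X^i) (d *: 'X^j) = (c * iter i theta d) *: 'X^(i + j).
Proof. by rewrite -msE smul_mono. Qed.

Lemma msA f g p : ms (ms f g) p = ms f (ms g p).
Proof.
rewrite (poly_mono f) !ms_suml; apply: eq_bigr => i _.
rewrite (poly_mono g) !ms_sumr !ms_suml !ms_sumr; apply: eq_bigr => j _.
rewrite (poly_mono p) !ms_sumr; apply: eq_bigr => l _.
by rewrite !ms_mono iterD thiM mulrA addnA.
Qed.

Lemma one_mono : (1 : {poly F}) = (1 : F) *: 'X^0.
Proof. by rewrite scale1r expr0. Qed.

Lemma ms1l f : ms 1 f = f.
Proof.
rewrite [RHS]poly_mono [in LHS](poly_mono f) ms_sumr; apply: eq_bigr => i _.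
by rewrite one_mono ms_mono mul1r add0n.
Qed.

Lemma ms1r f : ms f 1 = f.
Proof.
rewrite [RHS]poly_mono [in LHS](poly_mono f) ms_suml; apply: eq_bigr => i _.
by rewrite one_mono ms_mono thi1 mulr1 addn0.
Qed.

Lemma msCl c f : ms c%:P f = c *: f.
Proof. by rewrite -[c%:P]mulr1 mul_polyC msZl ms1l. Qed.

Lemma msCr f c : theta c = c -> ms f c%:P = c *: f.
Proof.
move=> Hc; rewrite [in RHS](poly_mono f) [in LHS](poly_mono f) ms_suml scaler_sumr.
apply: eq_bigr => i _.
by rewrite -[c%:P]mulr1 mul_polyC one_mono scalerA mulr1 ms_mono addn0 thi_fix // scalerA mulrC.
Qed.

Lemma msXX i j : ms 'X^i 'X^j = 'X^(i + j).
Proof.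
by rewrite -[X in ms X _]scale1r -[X in ms _ X]scale1r ms_mono thi1 mulr1 scale1r.
Qed.

Lemma msCC c d : ms c%:P d%:P = (c * d)%:P.
Proof. by rewrite msCl -mul_polyC -polyCM. Qed.



Lemma smul_top f g : f != 0 -> g != 0 ->
  (ms f g)`_((size f).-1 + (size g).-1) = lead_coef f * iter (size f).-1 theta (lead_coef g).
Proof.
move=> nf ng; rewrite -msE coef_smul /lead_coef.
case Ef: (size f) => [|df]; first by move/eqP: Ef; rewrite size_poly_eq0 (negbTE nf).
case Eg: (size g) => [|dg]; first by move/eqP: Eg; rewrite size_poly_eq0 (negbTE ng).
rewrite /= big_ord_recr /= big1 ?add0r => [|i _]; last first.
  apply: big1 => j _; have := ltn_ord i; have := ltn_ord j => Hj Hi.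
  by rewrite (_ : ((i + j)%N == (df + dg)%N) = false) ?mulr0 //; apply/negbTE; lia.
rewrite big_ord_recr /= big1 ?add0r => [|j _]; last first.
  have := ltn_ord j => Hj.
  by rewrite (_ : ((df + j)%N == (df + dg)%N) = false) ?mulr0 //; apply/negbTE; lia.
by rewrite eqxx mulr1.
Qed.

Lemma smul_top_neq0 f g : f != 0 -> g != 0 ->
  (ms f g)`_((size f).-1 + (size g).-1) != 0.
Proof.
move=> nf ng; rewrite smul_top // mulf_neq0 ?lead_coef_eq0 //.
by rewrite thi_eq0 lead_coef_eq0.
Qed.

Lemma smul_size_gt f g : f != 0 -> g != 0 ->
  ((size f).-1 + (size g).-1 < size (ms f g))%N.
Proof.
move=> nf ng; rewrite ltnNge; apply/negP => H.
by move: (smul_top_neq0 nf ng); rewrite nth_default // eqxx.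
Qed.

Lemma smul_eq0 {f g} : ms f g = 0 -> f = 0 \/ g = 0.
Proof.
move=> H; case: (eqVneq f 0) => [->|nf]; first by left.
case: (eqVneq g 0) => [->|ng]; first by right.
by move: (smul_top_neq0 nf ng); rewrite H coef0 eqxx.
Qed.

Lemma smul_cancelr f (f' : {poly F}) g : g != 0 -> ms f g = ms f' g -> f = f'.
Proof.
move=> ng H; apply/eqP; rewrite -subr_eq0; apply/eqP.
have E : ms (f - f') g = 0 by rewrite msBl H subrr.
by case: (smul_eq0 E) => // /eqP; rewrite (negbTE ng).
Qed.

Lemma smul_cancell f g (g' : {poly F}) : f != 0 -> ms f g = ms f g' -> g = g'.
Proof.
move=> nf H; apply/eqP; rewrite -subr_eq0; apply/eqP.
have E : ms f (g - g') = 0 by rewrite msBr H subrr.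
by case: (smul_eq0 E) => // /eqP; rewrite (negbTE nf).
Qed.

End Skew.


Section Cong.
Variable F : finFieldType.
Variable theta : {rmorphism F -> F}.
Variable n : nat.
Hypothesis n_gt0 : (0 < n)%N.
Hypothesis thn : forall c, iter n theta c = c.
Local Notation ms := (ms theta).
Local Notation cg e := (cong theta n e).
Implicit Types (f g r q : {poly F}) (c d e : F).

Lemma xn_size e : size (xn_e n e) = n.+1.
Proof. exact: size_XnsubC. Qed.
Lemma xn_neq0 e : xn_e n e != 0.
Proof. by rewrite -size_poly_eq0 xn_size. Qed.

Lemma congE e f (f' : {poly F}) : cg e f f' <-> exists q, f - f' = ms q (xn_e n e).
Proof. by rewrite /cong msE. Qed.

Lemma cong_refl e f : cg e f f.
Proof. by apply/congE; exists 0; rewrite subrr ms0l. Qed.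
Lemma cong_eq e f (f' : {poly F}) : f = f' -> cg e f f'.
Proof. by move=> ->; apply: cong_refl. Qed.
Lemma cong_sym e f (f' : {poly F}) : cg e f f' -> cg e f' f.
Proof. by move/congE=> [q Hq]; apply/congE; exists (- q); rewrite msNl -Hq opprB. Qed.
Lemma cong_trans e f (f' f'' : {poly F}) : cg e f f' -> cg e f' f'' -> cg e f f''.
Proof.
move/congE=> [q Hq] /congE [q' Hq']; apply/congE; exists (q + q').
by rewrite msDl -Hq -Hq' addrA subrK.
Qed.
Lemma congD e f (f' g g' : {poly F}) : cg e f f' -> cg e g g' -> cg e (f + g) (f' + g').
Proof.
move/congE=> [q Hq] /congE [q' Hq']; apply/congE; exists (q + q').
by rewrite msDl -Hq -Hq' opprD addrACA.
Qed.
Lemma congN e f (f' : {poly F}) : cg e f f' -> cg e (- f) (- f').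
Proof. by move/congE=> [q Hq]; apply/congE; exists (- q); rewrite msNl -Hq opprB opprK addrC. Qed.
Lemma congB e f (f' g g' : {poly F}) : cg e f f' -> cg e g g' -> cg e (f - g) (f' - g').
Proof. by move=> H1 H2; apply: congD => //; apply: congN. Qed.
Lemma congZ e c f (f' : {poly F}) : cg e f f' -> cg e (c *: f) (c *: f').
Proof. by move/congE=> [q Hq]; apply/congE; exists (c *: q); rewrite msZl -Hq scalerBr. Qed.
Lemma cong_sum e (I : Type) (s : seq I) (P : pred I) (G G' : I -> {poly F}) :
  (forall i, P i -> cg e (G i) (G' i)) ->
  cg e (\sum_(i <- s | P i) G i) (\sum_(i <- s | P i) G' i).
Proof.
move=> H; elim/big_rec2: _ => [|i x y Pi Hxy]; first exact: cong_refl.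
by apply: congD => //; apply: H.
Qed.
Lemma cong_mull e r f (f' : {poly F}) : cg e f f' -> cg e (ms r f) (ms r f').
Proof. by move/congE=> [q Hq]; apply/congE; exists (ms r q); rewrite -msBr Hq msA. Qed.
Lemma cong_X e : cg e (xn_e n e) 0.
Proof. by apply/congE; exists 1; rewrite subr0 ms1l. Qed.

Lemma msXn_comm f : ms 'X^n f = ms f 'X^n.
Proof.
rewrite (poly_mono f) ms_sumr ms_suml; apply: eq_bigr => i _.
by rewrite -(scale1r ('X^n : {poly F})) !ms_mono thn thi1 mulr1 mul1r addnC.
Qed.

Lemma msX_comm e f : theta e = e -> ms (xn_e n e) f = ms f (xn_e n e).
Proof. by move=> He; rewrite /xn_e msBl msBr msCl msCr // msXn_comm. Qed.

Lemma cong_mulr e r f (f' : {poly F}) : theta e = e -> cg e f f' -> cg e (ms f r) (ms f' r).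
Proof.
move=> He /congE [q Hq]; apply/congE; exists (ms q r).
by rewrite -msBl Hq msA msX_comm // msA.
Qed.

Lemma cong_mul e f (f' g g' : {poly F}) : theta e = e -> cg e f f' -> cg e g g' ->
  cg e (ms f g) (ms f' g').
Proof.
move=> He H1 H2; apply: (@cong_trans _ _ (ms f' g)); first exact: cong_mulr.
exact: cong_mull.
Qed.

Lemma cong_Xn e m : theta e = e -> cg e 'X^(n + m) (e *: 'X^m).
Proof.
move=> He; apply/congE; exists 'X^m.
by rewrite /xn_e msBr msXX msCr // addnC.
Qed.

Lemma poly_split f : (0 < size f)%N ->
  f = \poly_(i < (size f).-1) f`_i + f`_((size f).-1) *: 'X^((size f).-1).
Proof.
move=> Hs; apply/polyP => k; rewrite coefD coef_poly coefZ coefXn.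
case: ltngtP => Hk; rewrite ?mulr0 ?addr0 //; last by rewrite Hk mulr1 add0r.
by rewrite nth_default // -(prednK Hs).
Qed.

Lemma exists_rep e f : theta e = e -> exists r, (size r <= n)%N /\ cg e f r.
Proof.
move=> He; elim: {f}(size f).+1 {-2}f (ltnSn (size f)) => // m IH f Hf.
case: (leqP (size f) n) => Hsn; first by exists f; split => //; apply: cong_refl.
have Hs0 : (0 < size f)%N by lia.
set d := (size f).-1.
pose g := \poly_(i < d) f`_i + (f`_d * e) *: 'X^(d - n).
have Hg : (size g < m)%N.
  apply: leq_trans (_ : (size f <= m)%N); last by lia.
  apply: leq_ltn_trans (size_polyD _ _) _; rewrite gtn_max.
  apply/andP; split; first by apply: leq_ltn_trans (size_poly _ _) _; lia.
  by apply: leq_ltn_trans (size_scale_leq _ _) _; rewrite size_polyXn; lia.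
have [r [Hr1 Hr2]] := IH g Hg; exists r; split => //.
apply: cong_trans Hr2; rewrite {1}(poly_split Hs0) /g.
apply: congD; first exact: cong_refl.
rewrite -scalerA; apply: congZ.
rewrite -/d (_ : d = (n + (d - n))%N); last by lia.
by rewrite addKn; apply: cong_Xn.
Qed.

Lemma rep_unique e r (r' : {poly F}) : (size r <= n)%N -> (size r' <= n)%N ->
  cg e r r' -> r = r'.
Proof.
move=> H1 H2 /congE [q Hq]; apply/eqP; rewrite -subr_eq0 Hq.
case: (eqVneq q 0) => [->|nq]; first by rewrite ms0l.
have := smul_size_gt theta nq (xn_neq0 e); rewrite xn_size /= -Hq => H.
exfalso; have H3 := size_polyD r (- r'); rewrite size_polyN in H3.
have H5 := leq_ltn_trans (leq_addl _ _) H.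
by move: H5; rewrite ltnNge (leq_trans H3) // geq_max H1 H2.
Qed.

Lemma coef_pvE (c : 'rV[F]_n) k : (poly_of_vec c)`_k = \sum_(i < n) c 0 i * (k == i)%:R.
Proof. by rewrite /poly_of_vec coef_sum; apply: eq_bigr => i _; rewrite coefZ coefXn. Qed.

Lemma pv_size (c : 'rV[F]_n) : (size (poly_of_vec c) <= n)%N.
Proof.
apply/leq_sizeP => k Hk; rewrite coef_pvE big1 // => i _.
by rewrite (_ : (k == i) = false) ?mulr0 //; apply/negbTE; have := ltn_ord i; lia.
Qed.

Lemma coef_pv (c : 'rV[F]_n) (i : 'I_n) : (poly_of_vec c)`_i = c 0 i.
Proof.
rewrite coef_pvE (bigD1 i) //= eqxx mulr1 big1 ?addr0 // => j Hj.
rewrite (_ : (nat_of_ord i == nat_of_ord j) = false) ?mulr0 //.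
by apply/negbTE; apply: contra Hj => /eqP H; apply/eqP; apply: val_inj.
Qed.

Lemma pv_inj (c d : 'rV[F]_n) : poly_of_vec c = poly_of_vec d -> c = d.
Proof. by move=> H; apply/rowP => i; rewrite -!coef_pv H. Qed.

Lemma pv_surj r : (size r <= n)%N -> poly_of_vec (\row_(i < n) r`_i) = r.
Proof.
move=> Hr; apply/polyP => k; case: (ltnP k n) => Hk.
  by rewrite (coef_pv _ (Ordinal Hk)) mxE.
by rewrite !nth_default // ?(leq_trans (pv_size _) Hk) // (leq_trans Hr Hk).
Qed.

Lemma pvD (c d : 'rV[F]_n) : poly_of_vec (c + d) = poly_of_vec c + poly_of_vec d.
Proof. by rewrite /poly_of_vec -big_split; apply: eq_bigr => i _; rewrite mxE scalerDl. Qed.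
Lemma pvZ x (c : 'rV[F]_n) : poly_of_vec (x *: c) = x *: poly_of_vec c.
Proof. by rewrite /poly_of_vec scaler_sumr; apply: eq_bigr => i _; rewrite mxE scalerA. Qed.
Lemma pv0 : poly_of_vec (0 : 'rV[F]_n) = 0.
Proof. by rewrite /poly_of_vec big1 // => i _; rewrite mxE scale0r. Qed.

Lemma vv_spec e f : theta e = e -> cg e f (poly_of_vec (vv theta n e f)).
Proof.
move=> He; rewrite /vv; case: pickP => [c /asboolP //|H].
have [r [Hr1 Hr2]] := exists_rep f He.
move: (H (\row_(i < n) r`_i)); rewrite pv_surj // => /asboolPn; by [].
Qed.

Lemma vv_unique e f (c : 'rV[F]_n) : theta e = e -> cg e f (poly_of_vec c) -> vv theta n e f = c.
Proof.
move=> He H; apply: pv_inj; apply: (rep_unique (e := e)); rewrite ?pv_size //.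
apply: cong_trans H; apply: cong_sym; exact: vv_spec.
Qed.

Lemma vv_cong e f (f' : {poly F}) : theta e = e -> cg e f f' -> vv theta n e f = vv theta n e f'.
Proof. by move=> He H; apply: vv_unique => //; apply: cong_trans H (vv_spec _ He). Qed.

Lemma vvD e f (f' : {poly F}) : theta e = e ->
  vv theta n e (f + f') = vv theta n e f + vv theta n e f'.
Proof. by move=> He; apply: vv_unique => //; rewrite pvD; apply: congD; apply: vv_spec. Qed.
Lemma vvZ e x f : theta e = e -> vv theta n e (x *: f) = x *: vv theta n e f.
Proof. by move=> He; apply: vv_unique => //; rewrite pvZ; apply: congZ; apply: vv_spec. Qed.
Lemma vv0 e : theta e = e -> vv theta n e 0 = 0.
Proof. by move=> He; apply: vv_unique => //; rewrite pv0; apply: cong_refl. Qed.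
Lemma vv_sum e (I : Type) (s : seq I) (P : pred I) (G : I -> {poly F}) : theta e = e ->
  vv theta n e (\sum_(i <- s | P i) G i) = \sum_(i <- s | P i) vv theta n e (G i).
Proof. by move=> He; elim/big_rec2: _ => [|i x y _ <-]; rewrite ?vv0 ?vvD. Qed.
Lemma vv_eq0 e f : theta e = e -> vv theta n e f = 0 -> cg e f 0.
Proof. by move=> He H; have := vv_spec f He; rewrite H pv0. Qed.
Lemma vv_cong0 e f : theta e = e -> cg e f 0 -> vv theta n e f = 0.
Proof. by move=> He H; rewrite (vv_cong He H) vv0. Qed.

End Cong.


Section Parts.
Variable F : finFieldType.
Variable theta : {rmorphism F -> F}.
Variable n : nat.
Hypothesis n_gt0 : (0 < n)%N.
Hypothesis thn : forall c, iter n theta c = c.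
Variable a : F.
Hypothesis tha : theta a = a.
Local Notation ms := (ms theta).
Local Notation cg := (cong theta n a).
Local Notation vva := (vv theta n a).
Local Notation M := (Mth theta n a).
Local Notation xn := (xn_e n a).
Implicit Types (f g r q u w : {poly F}).

Lemma MthE f : M f = \matrix_(i < n, j < n) vva (ms 'X^i f) 0 j.
Proof. by rewrite /Mth msE. Qed.

Lemma Mth_cong f f' : cg f f' -> M f = M f'.
Proof.
move=> H; rewrite !MthE; apply/matrixP => i j; rewrite !mxE.
by rewrite (vv_cong n_gt0 tha (cong_mull _ H)).
Qed.

Lemma MthD f f' : M (f + f') = M f + M f'.
Proof.
rewrite !MthE; apply/matrixP => i j; rewrite !mxE msDr (vvD n_gt0 _ _ tha).
by rewrite mxE.
Qed.

Lemma MthM f f' : M (ms f f') = M f *m M f'.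
Proof.
rewrite !MthE; apply/matrixP => i j; rewrite !mxE.
set c := vva (ms 'X^i f).
have H : cg (ms 'X^i (ms f f')) (ms (poly_of_vec c) f').
  rewrite -msA; apply: (cong_mulr thn) => //; exact: vv_spec.
rewrite (vv_cong n_gt0 tha H) {H} /poly_of_vec ms_suml (vv_sum n_gt0 _ _ _ tha).
rewrite summxE; apply: eq_bigr => l _; rewrite msZl (vvZ n_gt0 _ _ tha) !mxE.
by rewrite -/c.
Qed.

Lemma vvXi (i : 'I_n) : vva 'X^i = \row_(k < n) ('X^i)`_k.
Proof.
apply: (vv_unique n_gt0 tha); rewrite pv_surj ?size_polyXn //; exact: cong_refl.
Qed.

Lemma Mth1 : M 1 = 1%:M.
Proof.
rewrite MthE; apply/matrixP => i j; rewrite !mxE ms1r vvXi !mxE coefXn.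
case: (eqVneq i j) => [->|Hij]; first by rewrite !eqxx.
rewrite (_ : (nat_of_ord j == nat_of_ord i) = false) //.
by apply/negbTE; apply: contra Hij => /eqP H; apply/eqP; apply: val_inj.
Qed.

Lemma Mth_inj f f' : M f = M f' -> cg f f'.
Proof.
move=> H; have E : vva f = vva f'.
  apply/rowP => j; have := congr1 (fun A : 'M_n => A (Ordinal n_gt0) j) H.
  by rewrite !MthE !mxE /= expr0 !ms1l.
apply: cong_trans (vv_spec n_gt0 f tha) _; rewrite E.
by apply: cong_sym; exact: vv_spec.
Qed.

Lemma Mth0 : M 0 = 0.
Proof. by rewrite MthE; apply/matrixP => i j; rewrite !mxE ms0r (vv0 n_gt0 tha) mxE. Qed.

Lemma ms_neq0l g h : xn = ms h g -> h != 0.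
Proof. by move=> H; apply/eqP => E; move: H; rewrite E ms0l => /eqP; rewrite (negbTE (xn_neq0 n_gt0 _)). Qed.
Lemma ms_neq0r g h : xn = ms h g -> g != 0.
Proof. by move=> H; apply/eqP => E; move: H; rewrite E ms0r => /eqP; rewrite (negbTE (xn_neq0 n_gt0 _)). Qed.

Lemma xn_swap g h : xn = ms h g -> xn = ms g h.
Proof.
move=> Hhg; have ng := ms_neq0r Hhg.
by apply: (smul_cancelr (theta:=theta) ng); rewrite msA -Hhg (msX_comm thn).
Qed.

Lemma part4 u w : ms u w = xn -> ms w u = xn ->
  [/\ forall f f', cg f f' -> cg (ms f u) (ms f' u),
      forall f f', cg (ms (f + f') u) (ms f u + ms f' u),
      forall r f, cg (ms (ms r f) u) (ms r (ms f u))
    & forall f,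
        (cg (ms f u) 0 <-> exists r, cg f (ms r w))
        /\ ((exists r, cg f (ms r w)) <->
            (forall X, (exists t, cg X (ms u t)) -> cg (ms f X) 0))].
Proof.
move=> Huw Hwu; have nu : u != 0 by apply: (ms_neq0l (g:=w)); rewrite Huw.
have ker : forall f, cg (ms f u) 0 <-> exists r, cg f (ms r w).
  move=> f; split.
    move/congE => [q]; rewrite subr0 -Hwu -msA => /(smul_cancelr (theta:=theta) nu) ->.
    by exists q; apply: cong_refl.
  move=> [r /congE [q Hq]]; apply/congE; exists (r + ms q u).
  by rewrite subr0 -(subrK (ms r w) f) Hq !msDl !msA Hwu (msX_comm thn) // addrC.
split => //.
- by move=> f f' H; apply: (cong_mulr thn).
- by move=> f f'; rewrite msDl; apply: cong_refl.
- by move=> r f; rewrite msA; apply: cong_refl.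
move=> f; split => //; split.
  move=> Hr X [t Ht]; apply: (@cong_trans _ _ _ _ _ (ms f (ms u t))).
    exact: cong_mull.
  rewrite -msA -(ms0l theta t); apply: (cong_mulr thn) => //; exact/ker.
move=> H; apply/ker; rewrite -[X in ms f X](ms1r theta); apply: H; exists 1.
exact: cong_refl.
Qed.

Lemma part5 u w : ms u w = xn -> ms w u = xn ->
  [/\ forall f f', cg f f' -> cg (ms u f) (ms u f'),
      forall f f', cg (ms u (f + f')) (ms u f + ms u f'),
      forall f r, cg (ms u (ms f r)) (ms (ms u f) r)
    & forall f,
        (cg (ms u f) 0 <-> exists t, cg f (ms w t))
        /\ ((exists t, cg f (ms w t)) <->
            (forall X, (exists s, cg X (ms s u)) -> cg (ms X f) 0))].
Proof.
move=> Huw Hwu; have nu : u != 0 by apply: (ms_neq0r (h:=w)); rewrite Hwu.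
have ker : forall f, cg (ms u f) 0 <-> exists t, cg f (ms w t).
  move=> f; split.
    move/congE => [q]; rewrite subr0 -(msX_comm thn) // -Huw msA => /(smul_cancell (theta:=theta) nu) ->.
    by exists q; apply: cong_refl.
  move=> [t /congE [q Hq]]; apply/congE; exists (t + ms u q).
  by rewrite subr0 -(subrK (ms w t) f) Hq msDr msDl -[ms u (ms w t)]msA Huw (msX_comm thn) // msA addrC.
split => //.
- by move=> f f' H; apply: cong_mull.
- by move=> f f'; rewrite msDr; apply: cong_refl.
- by move=> f r; rewrite msA; apply: cong_refl.
move=> f; split => //; split.
  move=> Ht X [s Hs]; apply: (@cong_trans _ _ _ _ _ (ms (ms s u) f)).
    exact: (cong_mulr thn).
  rewrite msA -(ms0r theta s); apply: cong_mull; exact/ker.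
move=> H; apply/ker; rewrite -[X in ms X f](ms1l theta); apply: H; exists 1.
exact: cong_refl.
Qed.

End Parts.


Lemma sum_rev (V : zmodType) s (G : nat -> V) :
  \sum_(i < s) G i = \sum_(i < s) G (s - i.+1)%N.
Proof. by rewrite (reindex_inj rev_ord_inj). Qed.

Section PhiSec.
Variable F : finFieldType.
Variable theta : {rmorphism F -> F}.
Variable n : nat.
Hypothesis n_gt0 : (0 < n)%N.
Hypothesis thn : forall c, iter n theta c = c.
Local Notation ms := (ms theta).
Implicit Types (f g r q : {poly F}) (c d e : F).

Lemma polyC_mono c : c%:P = c *: 'X^0 :> {poly F}.
Proof. by rewrite expr0 -mul_polyC mulr1. Qed.

Lemma cong_XnC e : theta e = e -> cong theta n e 'X^n e%:P.
Proof. by move=> He; have := cong_Xn n 0 He; rewrite addn0 -polyC_mono. Qed.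



Variable b : F.
Hypothesis b0 : b != 0.
Hypothesis thb : theta b = b.

Lemma thbV : theta b^-1 = b^-1.
Proof. by rewrite fmorphV thb. Qed.

Local Notation cgt := (cong theta n b^-1).
Local Notation P := (b *: 'X^(n.-1)).

Definition Pk k := iter k (ms P) 1.

Lemma PkS k : Pk k.+1 = ms P (Pk k). Proof. by []. Qed.
Lemma Pk0 : Pk 0 = 1. Proof. by []. Qed.

Lemma PkD i j : Pk (i + j) = ms (Pk i) (Pk j).
Proof. by elim: i => [|i IH]; rewrite ?ms1l // addSn !PkS IH msA. Qed.

Lemma Pk_base c : ms P (theta c)%:P = ms c%:P P.
Proof.
rewrite polyC_mono [c%:P]polyC_mono !ms_mono -iterSr prednK // thn add0n addn0.
by rewrite iter0 mulrC.
Qed.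

Lemma Pk_comm k c : ms (Pk k) (iter k theta c)%:P = ms c%:P (Pk k).
Proof.
elim: k c => [|k IH] c; first by rewrite ms1l ms1r.
by rewrite PkS iterSr msA IH -msA Pk_base msA.
Qed.

Lemma Pk_pow k : Pk k = (b ^+ k) *: 'X^(n.-1 * k).
Proof.
elim: k => [|k IH]; first by rewrite expr0 muln0 scale1r.
rewrite PkS IH ms_mono thi_fix; last by rewrite rmorphXn thb.
by rewrite exprS mulnS.
Qed.

Lemma Xqn e (q m : nat) : theta e = e -> cong theta n e 'X^(q * n + m) ((e ^+ q) *: 'X^m).
Proof.
move=> He; elim: q => [|q IH]; first by rewrite mul0n add0n expr0 scale1r; apply: cong_refl.
rewrite mulSn -addnA; apply: cong_trans (cong_Xn n _ He) _.
by rewrite exprS -scalerA; apply: congZ.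
Qed.

Lemma Pkn : cgt (Pk n) b%:P.
Proof.
rewrite Pk_pow -[(n.-1 * n)%N]addn0.
apply: cong_trans (congZ _ (Xqn _ _ thbV)) _; rewrite scalerA -polyC_mono.
have -> : b ^+ n * b^-1 ^+ n.-1 = b.
  by rewrite exprVn -{1}(prednK n_gt0) exprS -mulrA mulfV ?mulr1 ?expf_neq0.
exact: cong_refl.
Qed.

Lemma PX : cgt (ms P 'X) 1.
Proof.
rewrite -[X in ms _ X]expr1 -[X in ms _ X]scale1r ms_mono thi1 mulr1 addn1 prednK //.
apply: cong_trans (congZ _ (cong_XnC thbV)) _; rewrite -mul_polyC -polyCM mulfV //.
exact: cong_refl.
Qed.

Lemma XP : cgt (ms 'X P) 1.
Proof.
rewrite -[X in ms X _]expr1 -[X in ms X _]scale1r ms_mono /= thb mul1r add1n prednK //.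
apply: cong_trans (congZ _ (cong_XnC thbV)) _; rewrite -mul_polyC -polyCM mulfV //.
exact: cong_refl.
Qed.

Lemma PkX j : cgt (ms (Pk j) 'X^j) 1.
Proof.
elim: j => [|j IH]; first by rewrite ms1l expr0; apply: cong_refl.
rewrite -addn1 PkD (_ : Pk 1 = P); last by rewrite PkS Pk0 ms1r.
rewrite addnC -(msXX theta 1 j) msA -[ms P (ms _ _)]msA.
apply: (cong_trans _ IH); apply: cong_mull.
rewrite -[X in cgt _ X](ms1l theta 'X^j); apply: (cong_mulr thn); first exact: thbV.
rewrite expr1; exact: PX.
Qed.

Lemma XPk j : cgt (ms 'X^j (Pk j)) 1.
Proof.
elim: j => [|j IH]; first by rewrite expr0 ms1l; apply: cong_refl.
rewrite PkS -addn1 -(msXX theta j 1) msA -[ms 'X^1 (ms _ _)]msA.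
apply: (cong_trans _ IH); apply: cong_mull.
rewrite -[X in cgt _ X](ms1l theta (Pk j)); apply: (cong_mulr thn); first exact: thbV.
rewrite expr1; exact: XP.
Qed.

Definition Phi := locked (fun f => \sum_(i < size f) ms (Pk i) (f`_i)%:P).

Lemma PhiE f : Phi f = \sum_(i < size f) ms (Pk i) (f`_i)%:P.
Proof. by rewrite /Phi -lock. Qed.

Lemma Phi_pad N f : (size f <= N)%N -> Phi f = \sum_(i < N) ms (Pk i) (f`_i)%:P.
Proof.
move=> H; rewrite PhiE (sum_pad (G := fun i => ms (Pk i) (f`_i)%:P) H) // => i Hi.
by rewrite nth_default // ms0r.
Qed.

Lemma Phi0 : Phi 0 = 0.
Proof. by rewrite PhiE size_poly0 big_ord0. Qed.

Lemma PhiD f (f' : {poly F}) : Phi (f + f') = Phi f + Phi f'.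
Proof.
pose N := maxn (size f) (size f').
rewrite !(Phi_pad (N := N)) ?leq_maxl ?leq_maxr ?size_polyD // -big_split.
by apply: eq_bigr => i _; rewrite coefD polyCD msDr.
Qed.

Lemma Phi_sum (I : Type) (s : seq I) (Q : pred I) (G : I -> {poly F}) :
  Phi (\sum_(i <- s | Q i) G i) = \sum_(i <- s | Q i) Phi (G i).
Proof. by elim/big_rec2: _ => [|i x y _ <-]; rewrite ?Phi0 ?PhiD. Qed.

Lemma PhiN f : Phi (- f) = - Phi f.
Proof. by apply: (addIr (Phi f)); rewrite -PhiD !addNr Phi0. Qed.

Lemma Phi_mono c i : Phi (c *: 'X^i) = ms (Pk i) c%:P.
Proof.
rewrite (Phi_pad (N := i.+1)) ?(leq_trans (size_scale_leq _ _)) ?size_polyXn //.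
rewrite big_ord_recr /= big1 ?add0r => [|k _]; last first.
  by rewrite coefZ coefXn ltn_eqF // mulr0 ms0r.
by rewrite coefZ coefXn eqxx mulr1.
Qed.

Lemma Phi_anti f g : Phi (ms f g) = ms (Phi g) (Phi f).
Proof.
rewrite (poly_mono f) (poly_mono g) ms_suml !Phi_sum ms_sumr; apply: eq_bigr => i _.
rewrite ms_sumr Phi_sum ms_suml; apply: eq_bigr => j _.
rewrite ms_mono !Phi_mono [RHS]msA -(msA theta (g`_j)%:P) -(Pk_comm i) (msA theta (Pk i)) -(msA theta (Pk j)) -PkD.
by rewrite msCC addnC mulrC.
Qed.

Lemma Phi_xn : Phi (xn_e n b) = Pk n - b%:P.
Proof.
rewrite /xn_e PhiD PhiN -[X in Phi X](scale1r ('X^n : {poly F})) polyC_mono !Phi_mono.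
by rewrite ms1r Pk0 ms1l -polyC_mono.
Qed.

Lemma Phi_cong f (f' : {poly F}) : cong theta n b f f' -> cgt (Phi f) (Phi f').
Proof.
move/congE=> [q Hq]; have /congE [q1 Hq1] := Pkn.
apply/congE; exists (ms q1 (Phi q)).
rewrite -PhiN -PhiD Hq Phi_anti Phi_xn Hq1 msA (msX_comm thn) ?thbV //.
by rewrite msA.
Qed.


Lemma PhiRho h : cgt (Phi h) (ms (Pk (size h).-1) (rho_l theta h)).
Proof.
rewrite PhiE /rho_l poly_def ms_sumr (sum_rev _ (fun i => ms (Pk i) (h`_i)%:P)).
apply: cong_sum => i _.
have Hi := ltn_ord i.
have E1 : (size h - i.+1 = (size h).-1 - i)%N by lia.
rewrite E1 (_ : Pk (size h).-1 = ms (Pk ((size h).-1 - i)) (Pk i)); last first.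
  by rewrite -PkD subnK //; lia.
rewrite -(msCl theta) msA -[ms (Pk i) (ms _ _)]msA Pk_comm msA.
apply: cong_sym; apply: cong_mull; rewrite -[X in cgt _ X](ms1r theta).
by apply: cong_mull; exact: PkX.
Qed.

Lemma PhiRho' h : cgt (Phi (rho_l theta h)) (ms h (Pk (size h).-1)).
Proof.
have Eh : ms h (Pk (size h).-1) = \sum_(i < size h) ms (h`_i *: 'X^i) (Pk (size h).-1).
  by rewrite {1}(poly_mono h) ms_suml.
rewrite Eh (sum_rev _ (fun i => ms (h`_i *: 'X^i) (Pk (size h).-1))).
rewrite (Phi_pad (N := size h)) /rho_l ?size_poly //.
apply: cong_sum => i _.
have Hi := ltn_ord i.
have E1 : (size h - i.+1 = (size h).-1 - i)%N by lia.
rewrite coef_poly Hi Pk_comm E1.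
rewrite (_ : Pk (size h).-1 = ms (Pk ((size h).-1 - i)) (Pk i)); last first.
  by rewrite -PkD subnK //; lia.
rewrite -(msCl theta) msA -[ms 'X^_ (ms _ _)]msA.
apply: cong_mull; apply: cong_sym; rewrite -[X in cgt _ X](ms1l theta (Pk i)).
apply: (cong_mulr thn); first exact: thbV.
exact: XPk.
Qed.

Definition Ystar (c : F) (y : 'rV[F]_n) :=
  \sum_(j < n) (iter (n - j) theta (y 0 j) / c) *: 'X^(n - j).

Lemma PhiY (y : 'rV[F]_n) : cgt (Phi (Ystar b y)) (poly_of_vec y).
Proof.
rewrite /Ystar Phi_sum /poly_of_vec; apply: cong_sum => j _.
rewrite Phi_mono (_ : iter (n - j) theta (y 0 j) / b = iter (n - j) theta (y 0 j / b));
  last by rewrite thiM thiV (thi_fix _ thb).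
rewrite Pk_comm.
have C1 : cgt (Pk (n - j)) (b *: 'X^j).
  rewrite -[X in cgt X _](ms1r theta).
  apply: (@cong_trans _ _ _ _ _ (ms (Pk (n - j)) (ms (Pk j) 'X^j))).
    by apply: cong_mull; apply: cong_sym; exact: PkX.
  rewrite -msA -PkD subnK ?(ltnW (ltn_ord j)) //.
  rewrite -(msCl theta); apply: (cong_mulr thn); [exact: thbV | exact: Pkn].
apply: cong_trans (cong_mull _ C1) _.
by rewrite msCl scalerA divfK //; apply: cong_refl.
Qed.

Lemma YPhi (y : 'rV[F]_n) : cgt (Ystar b^-1 y) (Phi (poly_of_vec y)).
Proof.
rewrite /Ystar (Phi_pad (N := n)) ?pv_size //; apply: cong_sum => j _.
rewrite coef_pv.
have C2 : cgt 'X^(n - j) (b^-1 *: Pk j).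
  rewrite -[X in cgt X _](ms1r theta).
  apply: (@cong_trans _ _ _ _ _ (ms 'X^(n - j) (ms 'X^j (Pk j)))).
    by apply: cong_mull; apply: cong_sym; exact: XPk.
  rewrite -msA (msXX theta) subnK ?(ltnW (ltn_ord j)) //.
  rewrite -(msCl theta); apply: (cong_mulr thn); first exact: thbV.
  exact: (cong_XnC thbV).
have C3 : cgt (Pk j) (b *: 'X^(n - j)).
  apply: cong_sym; apply: cong_trans (congZ b C2) _.
  by rewrite scalerA mulfV // scale1r; apply: cong_refl.
apply: cong_sym; apply: cong_trans (cong_mulr thn (y 0 j)%:P thbV C3) _.
rewrite msZl polyC_mono -[X in ms X _](scale1r) ms_mono mul1r addn0 scalerA.
by rewrite invrK mulrC; apply: cong_refl.
Qed.

End PhiSec.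


Section Part6.
Variable F : finFieldType.
Variable theta : {rmorphism F -> F}.
Variable n : nat.
Hypothesis n_gt0 : (0 < n)%N.
Hypothesis thn : forall c, iter n theta c = c.
Variable a : F.
Hypothesis a0 : a != 0.
Hypothesis tha : theta a = a.
Variables g h : {poly F}.
Hypothesis Hhg : xn_e n a = ms theta h g.
Local Notation ms := (ms theta).
Local Notation cg := (cong theta n a).
Local Notation vva := (vv theta n a).
Implicit Types (f r q : {poly F}).

Lemma thaV : theta a^-1 = a^-1.
Proof. by rewrite fmorphV tha. Qed.

Definition kappa f := vva f 0 (Ordinal n_gt0).

Lemma kappa_cong f f' : cg f f' -> kappa f = kappa f'.
Proof. by move=> H; rewrite /kappa (vv_cong n_gt0 tha H). Qed.
Lemma kappaZ c f : kappa (c *: f) = c * kappa f.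
Proof. by rewrite /kappa (vvZ n_gt0 _ _ tha) mxE. Qed.
Lemma kappa0 : kappa 0 = 0.
Proof. by rewrite /kappa (vv0 n_gt0 tha) mxE. Qed.
Lemma kappa_sum (I : Type) (s : seq I) (P : pred I) (G : I -> {poly F}) :
  kappa (\sum_(i <- s | P i) G i) = \sum_(i <- s | P i) kappa (G i).
Proof. by rewrite /kappa (vv_sum n_gt0 _ _ _ tha) summxE. Qed.

Lemma vvX_small m : (m < n)%N -> vva 'X^m = \row_(k < n) ('X^m)`_k.
Proof.
move=> Hm; apply: (vv_unique n_gt0 tha); rewrite pv_surj ?size_polyXn //.
exact: cong_refl.
Qed.

Lemma vvX_big m : (m < n)%N -> vva 'X^(n + m) = a *: \row_(k < n) ('X^m)`_k.
Proof.
move=> Hm; rewrite (vv_cong n_gt0 tha (cong_Xn n m tha)) (vvZ n_gt0 _ _ tha).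
by rewrite vvX_small.
Qed.

Lemma kappaX (i j : 'I_n) : kappa 'X^(i + (n - j)) = if i == j then a else 0.
Proof.
have Hi := ltn_ord i; have Hj := ltn_ord j.
rewrite /kappa; case: (ltngtP i j) => H.
- have Eij : (i == j) = false := ltn_eqF H.
  rewrite Eij vvX_small; last by lia.
  rewrite mxE coefXn /=; rewrite (_ : (0 == i + (n - j))%N = false) //.
  by apply/negbTE; lia.
- have Eij : (i == j) = false by apply/negbTE; rewrite neq_ltn H orbT.
  rewrite Eij (_ : (i + (n - j) = n + (i - j))%N); last by lia.
  rewrite vvX_big; last by lia.
  rewrite !mxE coefXn /= (_ : (0 == i - j)%N = false) ?mulr0 //.
  by apply/negbTE; lia.
- have Eij : i = j by apply: val_inj.
  rewrite Eij eqxx (_ : (j + (n - j) = n + 0)%N); last by lia.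
  by rewrite vvX_big // !mxE coefXn /= mulr1.
Qed.

Lemma pairE (y c : 'rV[F]_n) : dotv y c = kappa (ms (poly_of_vec c) (Ystar theta a y)).
Proof.
rewrite /poly_of_vec /Ystar ms_suml kappa_sum /dotv; apply: eq_bigr => i _.
rewrite ms_sumr kappa_sum (bigD1 i) //= big1 ?addr0 => [|j Hj]; last first.
  by rewrite ms_mono kappaZ kappaX eq_sym (negbTE Hj) mulr0.
rewrite ms_mono kappaZ kappaX eqxx thiM thiV (thi_fix _ tha) -iterD subnKC ?thn.
  by rewrite -mulrA divfK // mulrC.
exact: ltnW (ltn_ord i).
Qed.

Lemma kappa_shift f (j : 'I_n) :
  kappa (ms 'X^(n - j) f) = iter (n - j) theta (vva f 0 j) * a.
Proof.
rewrite (kappa_cong (cong_mull _ (vv_spec n_gt0 f tha))) /poly_of_vec.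
rewrite -(scale1r ('X^(n - j) : {poly F})) ms_sumr kappa_sum (bigD1 j) //= big1 ?addr0.
  by rewrite ms_mono addnC kappaZ kappaX eqxx mul1r.
move=> l Hl; rewrite ms_mono addnC kappaZ kappaX (negbTE Hl) mulr0 //.
Qed.

Lemma part6 (y : 'rV[F]_n) :
  (forall c : 'rV[F]_n, (exists r, c = vva (ms r g)) -> dotv y c = 0)
  <-> (exists r, y = vv theta n a^-1 (ms r (rho_l theta h))).
Proof.
have Hgh : xn_e n a = ms g h by apply: (xn_swap n_gt0 thn tha).
split.
  move=> H; set Y := Ystar theta a y.
  have Z : vva (ms g Y) = 0.
    apply/rowP => j; rewrite mxE.
    have := H (vva (ms 'X^(n - j) g)) (ex_intro _ _ erefl).
    rewrite pairE (kappa_cong (cong_mulr thn Y tha (cong_sym (vv_spec n_gt0 _ tha)))).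
    rewrite msA kappa_shift => /eqP; rewrite mulf_eq0 (negbTE a0) orbF thi_eq0.
    by move/eqP.
  have K : cg (ms g Y) 0 := vv_eq0 n_gt0 tha Z.
  have [_ _ _ ker] := part5 n_gt0 thn tha (esym Hgh) (esym Hhg).
  have [t Ht] := (proj1 (ker Y)).1 K.
  exists (ms (Phi theta n a t) (Pk theta n a (size h).-1)).
  apply/esym; apply: (vv_unique n_gt0 thaV).
  apply: cong_sym; apply: (cong_trans (cong_sym (PhiY n_gt0 thn a0 tha y))).
  apply: (cong_trans (Phi_cong n_gt0 thn a0 tha Ht)).
  rewrite Phi_anti // msA; apply: cong_mull; exact: PhiRho.
move=> [r ->] c [s ->].
rewrite pairE; set y0 := vv theta n a^-1 (ms r (rho_l theta h)).
have ai0 : a^-1 != 0 by rewrite invr_eq0.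
have Y1 := YPhi n_gt0 thn ai0 thaV y0; rewrite invrK in Y1.
have Y2 : cong theta n a^-1 (poly_of_vec y0) (ms r (rho_l theta h)).
  apply: cong_sym; exact: (vv_spec n_gt0 _ thaV).
have Y3 := Phi_cong n_gt0 thn ai0 thaV Y2; rewrite invrK in Y3.
have Y4 := PhiRho' n_gt0 thn ai0 thaV h; rewrite invrK in Y4.
rewrite Phi_anti // in Y3.
have Y5 : cg (Ystar theta a y0)
   (ms (ms h (Pk theta n a^-1 (size h).-1)) (Phi theta n a^-1 r)).
  apply: (cong_trans Y1); apply: (cong_trans Y3); exact: (cong_mulr thn _ tha Y4).
have Y6 : cg (poly_of_vec (vva (ms s g))) (ms s g).
  apply: cong_sym; exact: (vv_spec n_gt0 _ tha).
rewrite (kappa_cong (cong_mul thn tha Y6 Y5)) -kappa0; apply: kappa_cong.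
rewrite !msA -[ms g (ms h _)]msA -Hgh.
rewrite -(ms0r theta s); apply: cong_mull.
rewrite -(ms0l theta (ms (Pk theta n a^-1 (size h).-1) (Phi theta n a^-1 r))).
apply: (cong_mulr thn _ tha); exact: cong_X.
Qed.

End Part6.


Unset Implicit Arguments. Set Strict Implicit.

Theorem theorem6p6 (F : finFieldType) (theta : {rmorphism F -> F})
  (n : nat) (a : F) (g h : {poly F}) :
  bijective theta ->
  (0 < n)%N ->
  (forall c : F, iter n theta c = c) ->
  a != 0 -> theta a = a ->
  xn_e n a = smul theta h g ->
  (* (1) M_a induces an injective ring homomorphism S_a -> F^(n x n) *)
  [/\ (forall f f', cong theta n a f f' -> Mth theta n a f = Mth theta n a f'),
      (forall f f', Mth theta n a (f + f') = Mth theta n a f + Mth theta n a f'),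
      (forall f f', Mth theta n a (smul theta f f')
                    = Mth theta n a f *m Mth theta n a f'),
      Mth theta n a 1 = 1%:M
    & (forall f f', Mth theta n a f = Mth theta n a f' -> cong theta n a f f')]
  /\
  (* (2) *)
  xn_e n a = smul theta g h
  /\
  (* (3) *)
  (Mth theta n a g *m Mth theta n a h = 0 /\ Mth theta n a h *m Mth theta n a g = 0)
  /\
  (* (4) psi_h : f |-> f h and psi_g : f |-> f g *)
  (forall u w : {poly F}, let psi := fun f => smul theta f u in
     (u = h /\ w = g) \/ (u = g /\ w = h) ->
     [/\ forall f f', cong theta n a f f' -> cong theta n a (psi f) (psi f'),
         forall f f', cong theta n a (psi (f + f')) (psi f + psi f'),
         forall r f, cong theta n a (psi (smul theta r f)) (smul theta r (psi f))
       & forall f,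
           (cong theta n a (psi f) 0 <-> exists r, cong theta n a f (smul theta r w))
           /\ ((exists r, cong theta n a f (smul theta r w)) <->
               (forall X, (exists t, cong theta n a X (smul theta u t)) ->
                          cong theta n a (smul theta f X) 0))])
  /\
  (* (5) psi'_h : f |-> h f and psi'_g : f |-> g f *)
  (forall u w : {poly F}, let psi := fun f => smul theta u f in
     (u = h /\ w = g) \/ (u = g /\ w = h) ->
     [/\ forall f f', cong theta n a f f' -> cong theta n a (psi f) (psi f'),
         forall f f', cong theta n a (psi (f + f')) (psi f + psi f'),
         forall f r, cong theta n a (psi (smul theta f r)) (smul theta (psi f) r)
       & forall f,
           (cong theta n a (psi f) 0 <-> exists t, cong theta n a f (smul theta w t))
           /\ ((exists t, cong theta n a f (smul theta w t)) <->
               (forall X, (exists s, cong theta n a X (smul theta s u)) ->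
                          cong theta n a (smul theta X f) 0))])
  /\
  (* (6) C = v_a(R g), C^perp = v_{a^-1}(R rho_l(h)) *)
  (forall y : 'rV[F]_n,
     (forall c : 'rV[F]_n, (exists r, c = vv theta n a (smul theta r g)) ->
        dotv y c = 0)
     <-> (exists r, y = vv theta n a^-1 (smul theta r (rho_l theta h)))).
Proof.
move=> _ n_gt0 thn a0 tha Hhg.
rewrite msE in Hhg; rewrite !msE.
have Hgh : xn_e n a = ms theta g h by apply: (xn_swap n_gt0 thn tha).
split.
  split.
  - by move=> f f' H; apply: (Mth_cong n_gt0 tha).
  - by move=> f f'; apply: (MthD n_gt0 tha).
  - by move=> f f'; apply: (MthM n_gt0 thn tha).
  - exact: (Mth1 n_gt0 tha).
  - by move=> f f' H; apply: (Mth_inj n_gt0 tha).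
split; first exact: Hgh.
split.
  rewrite -!(MthM n_gt0 thn tha) -Hgh -Hhg.
  by rewrite (Mth_cong n_gt0 tha (cong_X theta n a)) (Mth0 n_gt0 tha).
split.
  move=> u w; cbv beta zeta => [[[-> ->]|[-> ->]]].
    exact: (part4 n_gt0 thn tha (esym Hhg) (esym Hgh)).
  exact: (part4 n_gt0 thn tha (esym Hgh) (esym Hhg)).
split.
  move=> u w; cbv beta zeta => [[[-> ->]|[-> ->]]].
    exact: (part5 n_gt0 thn tha (esym Hhg) (esym Hgh)).
  exact: (part5 n_gt0 thn tha (esym Hgh) (esym Hhg)).
move=> y; exact: (part6 n_gt0 thn a0 tha Hhg y).
Qed.
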